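(* Let $\mathfrak a$ be an abelian ideal of $\mathfrak b$, $\mathcal S\in\mathfrak S_{\mathfrak a}$, $\mathcal M_{\mathcal S}=\{\gamma+\delta\mid\gamma\in\mathcal S,\ \delta\in\Delta^+,\ \gamma+\delta\in\Delta^+\}$ and $J_{\mathcal S}=\Delta_{\mathfrak a}\setminus(\mathcal S\sqcup\mathcal M_{\mathcal S})$. Suppose $\gamma^*\in\max(J_{\mathcal S})$ and $\gamma^*-\delta\in J_{\mathcal S}$ for some $\delta\in\Delta^+$. Let $\mu\in J_{\mathcal S}$. (1) If $\mu-\delta\in\Delta_{\mathfrak a}$, then $\mu-\delta\in J_{\mathcal S}$. (2) If $\mu-2\delta\in\Delta_{\mathfrak a}$, then both $\mu-\delta$ and $\mu-2\delta$ belong to $J_{\mathcal S}$.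
   Context: Let $G$ be a connected simple algebraic group over an algebraically closed field of characteristic zero, $B$ a Borel subgroup, $T\subset B$ a maximal torus, $\mathfrak b=\mathrm{Lie}(B)$, $\Delta$ the root system of $(G,T)$, $\Delta^+$ the positive roots determined by $B$, with partial order $\mu\preccurlyeq\nu$ iff $\nu-\mu$ is a nonnegative integral combination of simple roots; $\max(M)$ is the set of maximal elements of $M$. An abelian ideal of $\mathfrak b$ is a subspace $\mathfrak a\subset\mathfrak b$ with $[\mathfrak b,\mathfrak a]\subset\mathfrak a$, $[\mathfrak a,\mathfrak a]=0$; it is the sum of root spaces for roots in $\Delta_{\mathfrak a}\subset\Delta^+$. Two distinct roots are strongly orthogonal if neither their sum nor their difference is a root; $\mathfrak S_{\mathfrak a}$ is the set of strongly orthogonal subsets of $\Delta_{\mathfrak a}$. *)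

(* Defs.v *)
From HB Require Import structures.
From mathcomp Require Import all_boot all_order all_algebra.
From mathcomp Require Import reals.
Set Implicit Arguments. Unset Strict Implicit. Unset Printing Implicit Defensive.
Import Order.TTheory GRing.Theory Num.Theory.
Local Open Scope ring_scope.

Section RootSystems.
Variables (R : realType) (n : nat).
Local Notation V := 'rV[R]_n.

Definition dot (u v : V) : R := (u *m v^T) 0 0.

Definition cartan (b a : V) : R := 2 * dot b a / dot a a.

Definition root_system (Phi : seq V) : Prop :=
  [/\ 0 \notin Phi,
      (forall v : V, (forall a, a \in Phi -> dot v a = 0) -> v = 0),
      (forall a b, a \in Phi -> b \in Phi -> b - cartan b a *: a \in Phi),
      (forall a b, a \in Phi -> b \in Phi -> exists z : int, cartan b a = z%:~R) &
      (forall a (c : R), a \in Phi -> c *: a \in Phi -> c = 1 \/ c = -1)].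

Definition irreducible_rs (Phi : seq V) : Prop :=
  forall A : pred V,
    (exists2 a, a \in Phi & A a) -> (exists2 b, b \in Phi & ~~ A b) ->
    exists a b, [/\ a \in Phi, b \in Phi, A a, ~~ A b & dot a b != 0].

Definition rle (Pi : seq V) (mu nu : V) : Prop :=
  exists c : 'I_(size Pi) -> nat, nu - mu = \sum_(i < size Pi) (c i)%:R *: Pi`_i.

Definition is_base (Phi Pi : seq V) : Prop :=
  [/\ {subset Pi <= Phi},
      (forall c : 'I_(size Pi) -> R,
          \sum_(i < size Pi) c i *: Pi`_i = 0 -> forall i, c i = 0) &
      (forall a, a \in Phi -> rle Pi 0 a \/ rle Pi a 0)].

Definition positive (Phi Pi : seq V) (a : V) : Prop := a \in Phi /\ rle Pi 0 a.

(* Delta_a of an abelian ideal a of b: a subset I of the positive roots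
   closed under adding positive roots ([b,a] in a) and with no two
   elements summing to a root ([a,a] = 0). *)
Definition abelian_ideal (Phi Pi I : seq V) : Prop :=
  [/\ (forall a, a \in I -> positive Phi Pi a),
      (forall a d, a \in I -> positive Phi Pi d -> a + d \in Phi -> a + d \in I) &
      (forall a b, a \in I -> b \in I -> a + b \notin Phi)].

Definition strongly_orth_subset (Phi I S : seq V) : Prop :=
  {subset S <= I} /\
  (forall a b, a \in S -> b \in S -> a != b -> a + b \notin Phi /\ a - b \notin Phi).

Definition inM (Phi Pi S : seq V) (x : V) : Prop :=
  exists g d, [/\ g \in S, positive Phi Pi d, x = g + d & positive Phi Pi x].

Definition inJ (Phi Pi I S : seq V) (x : V) : Prop :=
  [/\ x \in I, x \notin S & ~ inM Phi Pi S x].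

Definition maxJ (Phi Pi I S : seq V) (x : V) : Prop :=
  inJ Phi Pi I S x /\ (forall y, inJ Phi Pi I S y -> rle Pi x y -> y = x).

End RootSystems.

(* Main.v *)
Require Import Defs.
From HB Require Import structures.
From mathcomp Require Import all_boot all_order all_algebra.
From mathcomp Require Import reals.
From mathcomp Require Import lra zify.
Import Order.TTheory GRing.Theory Num.Theory.
Local Open Scope ring_scope.

Set Implicit Arguments. Unset Strict Implicit.
Section Aux.
Variables (R : realType) (n : nat).
Local Notation V := 'rV[R]_n.

Lemma dotE (u v : V) : dot u v = \sum_i u 0 i * v 0 i.
Proof. by rewrite /dot !mxE; apply: eq_bigr => i _; rewrite mxE. Qed.

Lemma dotC (u v : V) : dot u v = dot v u.
Proof. by rewrite !dotE; apply: eq_bigr => i _; rewrite mulrC. Qed.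

Lemma dotDl (u v w : V) : dot (u + v) w = dot u w + dot v w.
Proof. by rewrite !dotE -big_split; apply: eq_bigr => i _; rewrite mxE mulrDl. Qed.

Lemma dotNl (u w : V) : dot (- u) w = - dot u w.
Proof. by rewrite !dotE -sumrN; apply: eq_bigr => i _; rewrite mxE mulNr. Qed.

Lemma dotZl (c : R) (u w : V) : dot (c *: u) w = c * dot u w.
Proof. by rewrite !dotE mulr_sumr; apply: eq_bigr => i _; rewrite mxE mulrA. Qed.

Lemma dotBl (u v w : V) : dot (u - v) w = dot u w - dot v w.
Proof. by rewrite dotDl dotNl. Qed.

Lemma dotDr (u v w : V) : dot w (u + v) = dot w u + dot w v.
Proof. by rewrite dotC dotDl !(dotC w). Qed.

Lemma dotBr (u v w : V) : dot w (u - v) = dot w u - dot w v.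
Proof. by rewrite dotC dotBl !(dotC w). Qed.

Lemma dotNr (u w : V) : dot w (- u) = - dot w u.
Proof. by rewrite dotC dotNl dotC. Qed.

Lemma dot_ge0 (v : V) : 0 <= dot v v.
Proof. by rewrite dotE; apply: sumr_ge0 => i _; rewrite -expr2 sqr_ge0. Qed.

Lemma dot_eq0 (v : V) : dot v v = 0 -> v = 0.
Proof.
rewrite dotE => h; apply/rowP => j; rewrite mxE.
have := @psumr_eq0P _ _ _ (fun i => v 0 i * v 0 i) _ h j isT.
by move=> /(_ _)/eqP; rewrite mulf_eq0 orbb => /(_ _)/eqP ->// i _; rewrite -expr2 sqr_ge0.
Qed.

Lemma dot_gt0 (v : V) : v != 0 -> 0 < dot v v.
Proof.
move=> hv; rewrite lt_def dot_ge0 andbT; apply/eqP => /dot_eq0 e.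
by rewrite e eqxx in hv.
Qed.

Lemma rs_nz (Phi : seq V) a : root_system Phi -> a \in Phi -> a != 0.
Proof. by case=> h0 _ _ _ _ ha; apply/eqP => e; move: ha; rewrite e (negbTE h0). Qed.

Lemma rs_opp (Phi : seq V) a : root_system Phi -> a \in Phi -> - a \in Phi.
Proof.
move=> hrs ha; have := hrs; case=> _ _ hr _ _.
have := hr a a ha ha; rewrite /cartan -mulrA divff; last first.
  by have := dot_gt0 (rs_nz hrs ha); rewrite lt_def => /andP[].
by rewrite mulr1 scaler_nat mulr2n opprD addrA subrr add0r.
Qed.

Lemma L1 (Phi : seq V) a b : root_system Phi -> a \in Phi -> b \in Phi ->
  dot a b < 0 -> a + b != 0 -> a + b \in Phi.
Proof.
move=> hrs ha hb hab hnz.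
have := hrs; case=> _ _ hr hi _.
have pa := dot_gt0 (rs_nz hrs ha); have pb := dot_gt0 (rs_nz hrs hb).
have [z1 hz1] := hi b a hb ha.
have [z2 hz2] := hi a b ha hb.
case: (z1 =P -1) => [e1|ne1].
  have := hr b a hb ha; rewrite hz1 e1.
  by rewrite [(-1)%:~R]/= scaleNr scale1r opprK.
case: (z2 =P -1) => [e2|ne2].
  have := hr a b ha hb; rewrite hz2 e2.
  by rewrite [(-1)%:~R]/= scaleNr scale1r opprK addrC.
exfalso; move/negP: hnz; apply; apply/eqP/dot_eq0.
have c1 : cartan a b < 0.
  by rewrite /cartan pmulr_llt0 ?invr_gt0 // pmulr_rlt0.
have c2 : cartan b a < 0.
  by rewrite /cartan dotC pmulr_llt0 ?invr_gt0 // pmulr_rlt0.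
have z1n : (z1 <= -2)%R.
  by move: c1; rewrite hz1 ltrz0 => h; lia.
have z2n : (z2 <= -2)%R.
  by move: c2; rewrite hz2 ltrz0 => h; lia.
have d1 : cartan a b <= -2.
  by rewrite hz1 (_ : -2 = (-2)%:~R) ?ler_int.
have d2 : cartan b a <= -2.
  by rewrite hz2 (_ : -2 = (-2)%:~R) ?ler_int.
move: d1 d2; rewrite /cartan (dotC b a) !ler_pdivrMr // => d1 d2.
apply/eqP; rewrite eq_le dot_ge0 andbT.
rewrite !dotDl !dotDr (dotC b a).
lra.
Qed.

Lemma L2 (Phi : seq V) a b : root_system Phi -> a \in Phi -> b \in Phi ->
  0 < dot a b -> a != b -> a - b \in Phi.
Proof.
move=> hrs ha hb hab hne; apply: L1 => //; first exact: rs_opp.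
  by rewrite dotNr oppr_lt0.
by rewrite subr_eq0.
Qed.

Lemma L0 (Phi : seq V) a b : root_system Phi -> a \in Phi -> b \in Phi ->
  dot a b = 0 -> a - b \in Phi -> a + b \in Phi.
Proof.
move=> hrs ha hb hab hd; have := hrs; case=> _ _ hr _ _.
have := hr b (a - b) hb hd.
have pb := dot_gt0 (rs_nz hrs hb).
rewrite /cartan dotBl hab sub0r mulrN mulNr -mulrA divff ?gt_eqF // mulr1.
by rewrite scaleNr opprK scaler_nat mulr2n addrA subrK.
Qed.

Lemma rle_add0 (Pi : seq V)
  (indep : forall c : 'I_(size Pi) -> R,
    \sum_(i < size Pi) c i *: Pi`_i = 0 -> forall i, c i = 0) x y :
  rle Pi 0 x -> rle Pi 0 y -> x + y = 0 -> y = 0.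
Proof.
move=> [cx hx] [cy hy] e; rewrite subr0 in hx; rewrite subr0 in hy.
have h := indep (fun i => (cx i + cy i)%:R).
have {}h : forall i, (cx i + cy i)%:R = 0 :> R.
  apply: h; rewrite (eq_bigr (fun i => (cx i)%:R *: Pi`_i + (cy i)%:R *: Pi`_i)).
    rewrite big_split /= -hx -hy; exact: e.
  by move=> i _; rewrite natrD scalerDl.
rewrite hy big1 // => i _.
by move: (h i) => /eqP; rewrite pnatr_eq0 addn_eq0 => /andP[_ /eqP ->]; rewrite scale0r.
Qed.

Lemma rle_add (Pi : seq V) x y : rle Pi 0 x -> rle Pi 0 y -> rle Pi 0 (x + y).
Proof.
move=> [cx hx] [cy hy]; rewrite subr0 in hx; rewrite subr0 in hy.
exists (fun i => (cx i + cy i)%N); rewrite subr0 hx hy -big_split /=.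
by apply: eq_bigr => i _; rewrite natrD scalerDl.
Qed.

End Aux.
Unset Implicit Arguments. Set Strict Implicit.

Set Implicit Arguments. Unset Strict Implicit.
Section Main.
Variables (R : realType) (n : nat).
Local Notation V := 'rV[R]_n.

Lemma eqmu (mu g d d' gs : V) : mu - d = g + d' -> mu - gs = g - (gs - d) + d'.
Proof.
move=> e; have -> : mu = g + d' + d by rewrite -e subrK.
by rewrite opprB -!addrA; congr (_ + _); rewrite addrC -!addrA; congr (_ + _); rewrite addrC.
Qed.

Lemma part1 (Phi Pi I S : seq V) (gs d mu : V) :
  root_system Phi -> is_base Phi Pi ->
  abelian_ideal Phi Pi I -> strongly_orth_subset Phi I S ->
  maxJ Phi Pi I S gs -> positive Phi Pi d -> inJ Phi Pi I S (gs - d) ->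
  inJ Phi Pi I S mu -> mu - d \in I -> inJ Phi Pi I S (mu - d).
Proof.
move=> hrs [hPi hind hpm] [hIpos hIup hIab] [hSI hSo] [[gsI gsS gsM] gsmax]
  [dPhi d0] [cI cS cM] [muI muS muM] hmdI.
have L3 : forall a b, a \in I -> b \in I -> 0 <= dot a b.
  move=> a b ha hb; rewrite leNgt; apply/negP => hlt.
  have [aP a0] := hIpos a ha; have [bP b0] := hIpos b hb.
  case: (eqVneq (a + b) 0) => [e|ne].
    have e' := rle_add0 hind a0 b0 e.
    by have := rs_nz hrs bP; rewrite e' eqxx.
  by have := L1 hrs aP bP hlt ne; rewrite (negbTE (hIab a b ha hb)).
have [muPhi mu0] := hIpos mu muI.
have [mdPhi md0] := hIpos _ hmdI.
have [cPhi c0] := hIpos _ cI.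
split => //.
  apply/negP => hS; apply: muM; exists (mu - d), d; split => //; last by rewrite subrK.
move=> [g [d' [gS [d'Phi d'0] e mdpos]]].
have gI := hSI g gS.
have [gPhi g0] := hIpos g gI.
have mug0 : dot mu g = 0.
  have := L3 mu g muI gI; rewrite le_eqVlt => /orP[/eqP <- //|hlt].
  exfalso; apply: muM.
  have ne : mu != g by apply/eqP => e'; move: muS; rewrite e' gS.
  have hmg := L2 hrs muPhi gPhi hlt ne.
  exists g, (mu - g); split => //; last by rewrite addrC subrK.
  split => //.
  have -> : mu - g = d + d'.
    have -> : mu = g + d' + d by rewrite -e subrK.
    by rewrite (addrC g d') addrAC addrK addrC.
  exact: rle_add.
have mdg : 0 < dot (mu - d) g.
  rewrite lt_def L3 // andbT; apply/eqP => h0.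
  have h1 : (mu - d) - g \in Phi by rewrite e (addrC g d') addrK.
  by have := L0 hrs mdPhi gPhi h0 h1; rewrite (negbTE (hIab _ _ hmdI gI)).
have dg : dot d g < 0.
  by move: mdg; rewrite dotBl mug0 sub0r oppr_gt0.
have cg : 0 < dot (gs - d) g.
  by rewrite dotBl; have := L3 gs g gsI gI; lra.
have cne : gs - d != g by apply/eqP => e'; move: cS; rewrite e' gS.
have cgPhi := L2 hrs cPhi gPhi cg cne.
case: (hpm _ cgPhi) => hc.
  apply: cM; exists g, (gs - d - g); split.
  - exact: gS.
  - by split => //; case: hc => c hc; exists c.
  - by rewrite [g + _]addrC subrK.
  - by split.
have hc' : rle Pi 0 (g - (gs - d)).
  by case: hc => c hc; exists c; rewrite subr0 -hc sub0r [RHS]opprB.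
have hle : rle Pi gs mu.
  by case: (rle_add hc' d'0) => c hc2; exists c; rewrite -hc2 subr0; apply: eqmu.
have emg := gsmax mu (And3 muI muS muM) hle.
have z : g - (gs - d) + d' = 0 by rewrite -(eqmu gs e) emg subrr.
have := rle_add0 hind hc' d'0 z => d'z.
by have := rs_nz hrs d'Phi; rewrite d'z eqxx.
Qed.

End Main.
Unset Implicit Arguments. Set Strict Implicit.

Theorem lemma3p8 (R : realType) (n : nat) (Phi Pi I S : seq 'rV[R]_n)
  (gs d mu : 'rV[R]_n) :
  root_system Phi -> irreducible_rs Phi -> is_base Phi Pi ->
  abelian_ideal Phi Pi I -> strongly_orth_subset Phi I S ->
  maxJ Phi Pi I S gs -> positive Phi Pi d -> inJ Phi Pi I S (gs - d) ->
  inJ Phi Pi I S mu ->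
  (mu - d \in I -> inJ Phi Pi I S (mu - d)) /\
  (mu - d *+ 2 \in I -> inJ Phi Pi I S (mu - d) /\ inJ Phi Pi I S (mu - d *+ 2)).
Proof.
move=> hrs _ hb hI hS hmax hd hc hmu.
split; first exact: part1 hrs hb hI hS hmax hd hc hmu.
move=> h2.
have hb' := hb; case: hb' => [_ hind _].
have hI' := hI; case: hI' => [hIpos hIup _].
have [dPhi d0] := hd.
have [m2Phi m20] := hIpos _ h2.
have [muPhi _] := hIpos _ (let: And3 x _ _ := hmu in x).
have ne : mu != d.
  apply/eqP => e; move: m20; rewrite e mulr2n opprD addrA subrr add0r => m0.
  have := rle_add0 hind d0 m0 (subrr d) => /eqP; rewrite oppr_eq0 => /eqP dz.
  by have := rs_nz hrs dPhi; rewrite dz eqxx.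
have eq2 : mu - d *+ 2 + d = mu - d by rewrite mulr2n opprD addrA subrK.
have hmd : mu - d \in I.
  rewrite -eq2; apply: hIup => //; rewrite eq2.
  case: (ltP 0 (dot mu d)) => hmu0.
    exact: L2 hrs muPhi dPhi hmu0 ne.
  rewrite -eq2; apply: L1 => //.
    have := dot_gt0 (rs_nz hrs dPhi).
    by rewrite dotBl mulr2n dotDl; lra.
  by rewrite eq2 subr_eq0.
have j1 := part1 hrs hb hI hS hmax hd hc hmu hmd.
split => //.
have -> : mu - d *+ 2 = mu - d - d by rewrite mulr2n opprD addrA.
apply: part1 hrs hb hI hS hmax hd hc j1 _.
by rewrite -addrA -opprD -mulr2n.
Qed.
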